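(* Assume the reward is bounded, $r(y,x_0)\in[-D,D]$, and let $\lambda>0$, $M\ge1$, $1\le I\le T$, $\epsilon>0$. Suppose that the energy estimates $\widehat{\mathcal E}(y,x_s)$ used in Algorithm 1 satisfy $|\mathcal E(y,x_s)-\widehat{\mathcal E}(y,x_s)|\le\epsilon$ for every query $y$ and every intermediate state $x_s$, and that $C-\epsilon-h(\epsilon,M,\lambda,D)>0$, where $$h(\epsilon,M,\lambda,D)=\frac{e^{D/\lambda}-e^{-D/\lambda}}{2}\sqrt{\frac{2}{M}\log\!\left(\frac{2}{\epsilon}\right)}.$$ Let $q(x_0\mid y)$ be the law of the output of Algorithm 1. Then $$\mathsf{TV}\big(q(x_0\mid y)\,\|\,p(x_0\mid y)\big)\le I\left(\frac{2\epsilon+h(\epsilon,M,\lambda,D)}{C-\epsilon-h(\epsilon,M,\lambda,D)}\right)+I\epsilon=\tilde{\mathcal O}\!\left(\frac{I}{\sqrt M}+I\epsilon\right).$$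
   Context: Setting: MLM framework with vocabulary $\mathcal V$, response length $d_x$, nested mask sets, backward generation $x_T\to\cdots\to x_0$ with $x_T$ the fixed fully masked sequence; $p_{\mathrm{ref}}$ is a reference model giving transitions $p_{\mathrm{ref}}(x_s\mid y,x_t)$ and completions $p_{\mathrm{ref}}(x_0\mid y,x_s)$ for a query $y$. Target distribution: $p(x_0\mid y)=p_{\mathrm{ref}}(x_0\mid y)\exp(r(y,x_0)/\lambda)/C$ with $C=\sum_{x_0}p_{\mathrm{ref}}(x_0\mid y)\exp(r(y,x_0)/\lambda)$. Energy: $\mathcal E(y,x_s)=\mathbb E_{p_{\mathrm{ref}}(x_0\mid y,x_s)}[\exp(r(y,x_0)/\lambda)]$. Algorithm 1 (ETS): given $I$ guidance steps with timesteps $t_i=iT/I$ ($t_0=0$, $t_I=T$), start at $x_{t_I}=x_T$; for $i=I,I-1,\dots,1$: draw $M$ candidates $x_{t_{i-1}}(1),\dots,x_{t_{i-1}}(M)$ i.i.d. from $p_{\mathrm{ref}}(x_{t_{i-1}}\mid y,x_{t_i})$; compute weights $w_m=\widehat{\mathcal E}(y,x_{t_{i-1}}(m))/\sum_{m'=1}^M\widehat{\mathcal E}(y,x_{t_{i-1}}(m'))$; select index $m^*$ with probability $w_{m^*}$ and set $x_{t_{i-1}}=x_{t_{i-1}}(m^* )$. The output is $x_0$. Total variation distance: $\mathsf{TV}(p\|q)=\frac12\sum_x|p(x)-q(x)|$. *)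

(* Defs.v *)
From mathcomp Require Import all_boot all_order all_algebra.
From mathcomp Require Import reals sequences exp.
Set Implicit Arguments. Unset Strict Implicit. Unset Printing Implicit Defensive.
Import Order.TTheory GRing.Theory Num.Theory.
Local Open Scope ring_scope.

Section ETS.
Variables (R : realType) (V : finType) (dx : nat) (Y : Type).

(* A (partially) masked response: each position holds a token or the mask (None). *)
Definition state := {ffun 'I_dx -> option V}.

Definition fully_masked : state := [ffun _ => None].

(* Reference model, given by its one-step backward kernels:
   K t y x x' = p_ref(x_{t-1} = x' | y, x_t = x), for 1 <= t <= T. *)
Definition kernel := nat -> Y -> state -> state -> R.

Variable K : kernel.

(* ptrans y s n x x' = p_ref(x_s = x' | y, x_{s+n} = x)  (n-step backward transition). *)
Fixpoint ptrans (y : Y) (s n : nat) (x x' : state) : R :=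
  match n with
  | 0 => (x == x')%:R
  | n'.+1 => \sum_(z : state) K (s + n'.+1) y x z * ptrans y s n' z x'
  end.

Definition pref_trans (y : Y) (t s : nat) (x x' : state) : R := ptrans y s (t - s) x x'.

Definition pref_compl (y : Y) (s : nat) (x x0 : state) : R := ptrans y 0 s x x0.

Definition pref0 (T : nat) (y : Y) (x0 : state) : R := pref_compl y T fully_masked x0.

Variables (r : Y -> state -> R) (lam : R).

Definition energy (y : Y) (s : nat) (x : state) : R :=
  \sum_(x0 : state) pref_compl y s x x0 * expR (r y x0 / lam).

Definition normC (T : nat) (y : Y) : R :=
  \sum_(x0 : state) pref0 T y x0 * expR (r y x0 / lam).

Definition target (T : nat) (y : Y) (x0 : state) : R :=
  pref0 T y x0 * expR (r y x0 / lam) / normC T y.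

Definition tstep (T I i : nat) : nat := (i * T %/ I)%N.

Variable Ehat : Y -> nat -> state -> R.

(* One ETS guidance step from x_t = x to x_s = x' with M candidates:
   draw c(1..M) iid from p_ref(. | y, x_t), pick m with prob. w_m, output c m. *)
Definition ets_step (M : nat) (y : Y) (t s : nat) (x x' : state) : R :=
  \sum_(c : {ffun 'I_M -> state})
     (\prod_(m < M) pref_trans y t s x (c m)) *
     ((\sum_(m < M | c m == x') Ehat y s (c m)) / (\sum_(m < M) Ehat y s (c m))).

(* ets_from T I M y k x x0 = law of the output x_0 of Algorithm 1 when the chain
   is at x_{t_k} = x and guidance steps i = k, ..., 1 remain. *)
Fixpoint ets_from (T I M : nat) (y : Y) (k : nat) (x x0 : state) : R :=
  match k with
  | 0 => (x == x0)%:R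
  | k'.+1 => \sum_(z : state)
               ets_step M y (tstep T I k'.+1) (tstep T I k') x z * ets_from T I M y k' z x0
  end.

Definition ets_law (T I M : nat) (y : Y) (x0 : state) : R :=
  ets_from T I M y I fully_masked x0.

End ETS.

Definition TV (R : realType) (S : finType) (p q : S -> R) : R :=
  2^-1 * \sum_(x : S) `|p x - q x|.

Definition hfun (R : realType) (eps : R) (M : nat) (lam D : R) : R :=
  (expR (D / lam) - expR (- (D / lam))) / 2
  * Num.sqrt (2 / M%:R * ln (2 / eps)).

(* Main.v *)
Require Import Defs.
From mathcomp Require Import all_boot all_order all_algebra.
From mathcomp Require Import reals sequences exp ring lra.
Set Implicit Arguments. Unset Strict Implicit. Unset Printing Implicit Defensive.
Import Order.TTheory GRing.Theory Num.Theory.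
Local Open Scope ring_scope.
Section Prod.
Variables (R : realType) (S : finType) (M : nat) (pi : S -> R).
Hypothesis pi_sum : \sum_t pi t = 1.

Definition Aw (c : {ffun 'I_M -> S}) : R := \prod_(m < M) pi (c m).

Lemma prod_marg (G : 'I_M -> S -> R) :
  \sum_(c : {ffun 'I_M -> S}) \prod_(m < M) G m (c m) = \prod_(m < M) \sum_t G m t.
Proof. by rewrite bigA_distr_bigA. Qed.

Lemma sumA : \sum_c Aw c = 1.
Proof. rewrite /Aw (prod_marg (fun _ t => pi t)); apply: big1 => m _; exact: pi_sum. Qed.

Lemma marg1 (i : 'I_M) (phi : S -> R) :
  \sum_c Aw c * phi (c i) = \sum_t pi t * phi t.
Proof.
pose G (m : 'I_M) t := pi t * (if m == i then phi t else 1).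
transitivity (\sum_(c : {ffun 'I_M -> S}) \prod_(m < M) G m (c m)).
  apply: eq_bigr => c _; rewrite /G big_split /= /Aw; congr (_ * _).
  by rewrite (bigD1 i) //= eqxx big1 ?mulr1 // => m /negbTE ->.
have h1 : \prod_(m < M | m != i) \sum_t G m t = 1.
  apply: big1 => m /negbTE mi; rewrite /G -[RHS]pi_sum; apply: eq_bigr => t _; by rewrite mi mulr1.
rewrite prod_marg (bigD1 i) //= h1 mulr1.
by apply: eq_bigr => t _; rewrite /G eqxx.
Qed.

Lemma marg2 (i j : 'I_M) (f g : S -> R) : i != j ->
  \sum_c Aw c * (f (c i) * g (c j)) = (\sum_t pi t * f t) * (\sum_t pi t * g t).
Proof.
move=> ij.
pose G (m : 'I_M) t := pi t * (if m == i then f t else if m == j then g t else 1).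
transitivity (\sum_(c : {ffun 'I_M -> S}) \prod_(m < M) G m (c m)).
  apply: eq_bigr => c _; rewrite /G big_split /= /Aw; congr (_ * _).
  rewrite (bigD1 i) //= eqxx (bigD1 j) /=; last by rewrite eq_sym.
  rewrite eqxx eq_sym (negbTE ij) big1 ?mulr1 // => m /andP[/negbTE -> /negbTE ->] //.
have h1 : \prod_(m < M | (m != i) && (m != j)) \sum_t G m t = 1.
  apply: big1 => m /andP[/negbTE mi /negbTE mj]; rewrite /G.
  rewrite -[RHS]pi_sum; apply: eq_bigr => t _; by rewrite mi mj mulr1.
rewrite prod_marg (bigD1 i) //= (bigD1 j) /=; last by rewrite eq_sym.
rewrite h1 mulr1; congr (_ * _); apply: eq_bigr => t _; rewrite /G ?eqxx //.
by rewrite eq_sym (negbTE ij) ?eqxx.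
Qed.

Lemma sumA_ge0 c : (forall t, 0 <= pi t) -> 0 <= Aw c.
Proof. by move=> h; apply: prodr_ge0 => m _. Qed.

Lemma var_sum (g : S -> R) : \sum_t pi t * g t = 0 ->
  \sum_c Aw c * (\sum_(m < M) g (c m)) ^+ 2 = M%:R * \sum_t pi t * g t ^+ 2.
Proof.
move=> g0.
have E c : Aw c * (\sum_(m < M) g (c m)) ^+ 2 =
   \sum_(m < M) \sum_(m' < M) Aw c * (g (c m) * g (c m')).
  rewrite expr2 big_distrl /= big_distrr /=; apply: eq_bigr => m _.
  by rewrite big_distrr /= big_distrr /=.
rewrite (eq_bigr _ (fun c _ => E c)) exchange_big /=.
transitivity (\sum_(m < M) \sum_t pi t * g t ^+ 2).
  apply: eq_bigr => m _; rewrite exchange_big /= (bigD1 m) //=.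
  have -> : \sum_(m' < M | m' != m) \sum_c Aw c * (g (c m) * g (c m')) = 0.
    by apply: big1 => m' m'm; rewrite marg2 1?eq_sym // g0 mul0r.
  by rewrite addr0 -(marg1 m); apply: eq_bigr => c _; rewrite expr2.
by rewrite sumr_const card_ord mulr_natl.
Qed.

Lemma cs_abs (X : {ffun 'I_M -> S} -> R) : (forall t, 0 <= pi t) ->
  (\sum_c Aw c * `|X c|) ^+ 2 <= \sum_c Aw c * X c ^+ 2.
Proof.
move=> pi0; set a := \sum_c Aw c * `|X c|.
have : 0 <= \sum_c Aw c * (`|X c| - a) ^+ 2.
  by apply: sumr_ge0 => c _; apply: mulr_ge0; [exact: sumA_ge0|exact: sqr_ge0].
have -> : \sum_c Aw c * (`|X c| - a) ^+ 2 =
   \sum_c Aw c * X c ^+ 2 - 2 * a * \sum_c Aw c * `|X c| + a ^+ 2 * \sum_c Aw c.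
  transitivity (\sum_c (Aw c * X c ^+ 2 - 2 * a * (Aw c * `|X c|)) + \sum_c a ^+ 2 * Aw c).
    rewrite -big_split /=; apply: eq_bigr => c _.
    by rewrite -[X c ^+ 2]real_normK ?num_real //; ring.
  by rewrite sumrB -!mulr_sumr.
by rewrite sumA -/a; lra.
Qed.
End Prod.

Section Step.
Variables (R : realType) (S : finType) (M : nat) (pi e w : S -> R) (eps Lo Hi : R).
Hypothesis pi_ge0 : forall t, 0 <= pi t.
Hypothesis pi_sum : \sum_t pi t = 1.
Hypothesis M_gt0 : (0 < M)%N.
Hypothesis w_gt0 : forall t, 0 < w t.
Hypothesis ew : forall t, `|e t - w t| <= eps.
Hypothesis e_lo : forall t, Lo <= e t.
Hypothesis e_hi : forall t, e t <= Hi.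
Hypothesis Lo_gt0 : 0 < Lo.

Definition mu := \sum_t pi t * e t.
Definition Qs z := \sum_(c : {ffun 'I_M -> S}) Aw pi c *
   ((\sum_(m < M | c m == z) w (c m)) / (\sum_(m < M) w (c m))).
Definition Ps z := pi z * e z / mu.

Lemma mu_ge : Lo <= mu.
Proof.
rewrite /mu -[Lo]mul1r -pi_sum mulr_suml; apply: ler_sum => t _.
by apply: ler_wpM2l.
Qed.
Lemma mu_le : mu <= Hi.
Proof.
rewrite /mu -[Hi]mul1r -pi_sum mulr_suml; apply: ler_sum => t _.
by apply: ler_wpM2l.
Qed.
Lemma mu_gt0 : 0 < mu.
Proof. exact: lt_le_trans Lo_gt0 mu_ge. Qed.

Lemma M_gt0R : 0 < M%:R :> R.
Proof. by rewrite ltr0n. Qed.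

Lemma W_gt0 (c : {ffun 'I_M -> S}) : 0 < \sum_(m < M) w (c m).
Proof.
case: M c M_gt0 => // n c _; rewrite big_ord_recl.
apply: lt_le_trans (w_gt0 (c ord0)) _; rewrite lerDl.
by apply: sumr_ge0 => m _; exact: ltW.
Qed.

Lemma part_sum (c : {ffun 'I_M -> S}) (F : 'I_M -> R) :
  \sum_z \sum_(m < M | c m == z) F m = \sum_(m < M) F m.
Proof.
under eq_bigr do rewrite big_mkcond /=.
rewrite exchange_big /=; apply: eq_bigr => m _.
rewrite -big_mkcond /=.
rewrite (eq_bigl (fun z => z == c m)) ?big_pred1_eq // => z; try by rewrite eq_sym.
Qed.

Lemma Ps_expr z : Ps z =
  \sum_c Aw pi c * ((\sum_(m < M | c m == z) e (c m)) / (M%:R * mu)).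
Proof.
have -> : \sum_c Aw pi c * ((\sum_(m < M | c m == z) e (c m)) / (M%:R * mu)) =
   (\sum_c Aw pi c * (\sum_(m < M | c m == z) e (c m))) / (M%:R * mu).
  by rewrite mulr_suml; apply: eq_bigr => c _; rewrite mulrA.
have -> : \sum_c Aw pi c * (\sum_(m < M | c m == z) e (c m)) =
   \sum_(m < M) \sum_c Aw pi c * ((c m == z)%:R * e (c m)).
  rewrite exchange_big /=; apply: eq_bigr => c _.
  rewrite big_mkcond /= mulr_sumr; apply: eq_bigr => m _.
  by case: eqP => _; rewrite ?mul1r ?mul0r.
have hm : forall m : 'I_M, \sum_c Aw pi c * ((c m == z)%:R * e (c m)) = pi z * e z.
  move=> m; rewrite (marg1 pi_sum m (fun t => (t == z)%:R * e t)).
  rewrite (bigD1 z) //= eqxx mul1r big1 ?addr0 // => t /negbTE ->.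
  by rewrite mul0r mulr0.
rewrite (eq_bigr (fun _ => pi z * e z)); last by move=> m _; exact: hm.
rewrite sumr_const card_ord /Ps.
have := mu_gt0; have := M_gt0R => h1 h2.
by rewrite -mulr_natl; field; rewrite ?gt_eqF ?mulr_gt0 // lt0r_neq0.
Qed.

Lemma point_bound (c : {ffun 'I_M -> S}) :
  \sum_(m < M) `|w (c m) / (\sum_(m' < M) w (c m')) - e (c m) / (M%:R * mu)|
  <= `|M%:R * mu - \sum_(m < M) e (c m)| / (M%:R * mu) + 2 * eps / mu.
Proof.
set W := \sum_(m' < M) w (c m'); set K := M%:R * mu.
have W0 : 0 < W := W_gt0 c.
have K0 : 0 < K by rewrite mulr_gt0 ?M_gt0R ?mu_gt0.
have sew : \sum_(m < M) `|w (c m) - e (c m)| <= M%:R * eps.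
  have -> : M%:R * eps = \sum_(m < M) eps by rewrite sumr_const card_ord mulr_natl.
  apply: ler_sum => m _.
  by rewrite distrC.
have h1 : \sum_(m < M) `|w (c m) / W - e (c m) / K| <=
   \sum_(m < M) (w (c m) * `|W^-1 - K^-1|) + \sum_(m < M) `|w (c m) - e (c m)| / K.
  rewrite -big_split /=; apply: ler_sum => m _.
  have -> : w (c m) / W - e (c m) / K =
     w (c m) * (W^-1 - K^-1) + (w (c m) - e (c m)) / K by field; rewrite ?gt_eqF.
  apply: le_trans (ler_normD _ _) _.
  have Ki : 0 < K^-1 by rewrite invr_gt0.
  by rewrite normrM (ger0_norm (ltW (w_gt0 _))) normrM (gtr0_norm Ki).
apply: le_trans h1 _.
rewrite -mulr_suml -/W -mulr_suml.
have h2 : W * `|W^-1 - K^-1| = `|K - W| / K.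
  have Ki : 0 < K^-1 by rewrite invr_gt0.
  have e1 : W * `|W^-1 - K^-1| = `|W * (W^-1 - K^-1)| by rewrite normrM (gtr0_norm W0).
  have e2 : `|K - W| / K = `|(K - W) / K| by rewrite normrM (gtr0_norm Ki).
  rewrite e1 e2; congr `|_|; field; rewrite ?gt_eqF //.
rewrite h2.
have h3 : `|K - W| <= `|K - \sum_(m < M) e (c m)| + M%:R * eps.
  have -> : K - W = (K - \sum_(m < M) e (c m)) + \sum_(m < M) (e (c m) - w (c m)).
    by rewrite sumrB /W; ring.
  apply: le_trans (ler_normD _ _) _; rewrite lerD2l.
  apply: le_trans (ler_norm_sum _ _ _) _.
  apply: le_trans sew; apply: ler_sum => m _; by rewrite distrC.
have Kinv : 0 < K^-1 by rewrite invr_gt0.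
have h4 : `|K - W| / K <= (`|K - \sum_(m < M) e (c m)| + M%:R * eps) / K.
  by rewrite ler_pM2r.
have h5 : (\sum_(m < M) `|w (c m) - e (c m)|) / K <= M%:R * eps / K.
  by rewrite ler_pM2r.
have h6 : M%:R * eps / K = eps / mu.
  rewrite /K; have := M_gt0R; have := mu_gt0 => ha hb.
  by field; rewrite ?gt_eqF.
have := lerD h4 h5; rewrite h6 => h7; apply: le_trans h7 _.
rewrite mulrDl h6; lra.
Qed.

Lemma diff_bound : \sum_z `|Qs z - Ps z| <=
  \sum_c Aw pi c * \sum_(m < M) `|w (c m) / (\sum_(m' < M) w (c m')) - e (c m) / (M%:R * mu)|.
Proof.
have E z : Qs z - Ps z = \sum_c Aw pi c *
    (\sum_(m < M | c m == z) (w (c m) / (\sum_(m' < M) w (c m')) - e (c m) / (M%:R * mu))).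
  rewrite Ps_expr /Qs -sumrB; apply: eq_bigr => c _.
  by rewrite sumrB -!mulr_suml mulrBr.
have h1 : forall z, `|Qs z - Ps z| <= \sum_c Aw pi c *
    (\sum_(m < M | c m == z) `|w (c m) / (\sum_(m' < M) w (c m')) - e (c m) / (M%:R * mu)|).
  move=> z; rewrite E; apply: le_trans (ler_norm_sum _ _ _) _; apply: ler_sum => c _.
  rewrite normrM (ger0_norm (sumA_ge0 _ pi_ge0)); apply: ler_wpM2l.
    exact: sumA_ge0.
  exact: ler_norm_sum.
apply: le_trans (ler_sum _ (fun z _ => h1 z)) _.
rewrite exchange_big /=; apply: ler_sum => c _.
by rewrite -mulr_sumr part_sum.
Qed.

Lemma step_bound : mu * (2^-1 * \sum_z `|Qs z - Ps z|) <=
  eps + (Hi - Lo) * Num.sqrt M%:R / (2 * M%:R).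
Proof.
set K := M%:R * mu.
have K0 : 0 < K by rewrite mulr_gt0 ?M_gt0R ?mu_gt0.
set g := fun t => mu - e t.
set X := fun c : {ffun 'I_M -> S} => \sum_(m < M) g (c m).
have hX (c : {ffun 'I_M -> S}) : `|K - \sum_(m < M) e (c m)| = `|X c|.
  congr `|_|; rewrite /X /g sumrB sumr_const card_ord /K mulr_natl //.
have h1 : \sum_z `|Qs z - Ps z| <= (\sum_c Aw pi c * `|X c|) / K + 2 * eps / mu.
  apply: le_trans diff_bound _.
  have -> : (\sum_c Aw pi c * `|X c|) / K + 2 * eps / mu =
      \sum_c Aw pi c * (`|X c| / K + 2 * eps / mu).
    rewrite mulr_suml; under [RHS]eq_bigr do rewrite mulrDr.
    rewrite big_split /= -(mulr_suml _ _ (Aw pi)) (sumA M pi_sum) mul1r.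
    by congr (_ + _); apply: eq_bigr => c _; rewrite mulrA.
  apply: ler_sum => c _; apply: ler_wpM2l; first exact: sumA_ge0.
  by rewrite -hX; exact: point_bound.
set E := \sum_c Aw pi c * `|X c|.
have E0 : 0 <= E by apply: sumr_ge0 => c _; apply: mulr_ge0; [exact: sumA_ge0|].
have HL : Lo <= Hi := le_trans mu_ge mu_le.
have HLp : 0 <= Hi - Lo by rewrite subr_ge0.
have gs : \sum_t pi t * g t = 0.
  rewrite /g; under eq_bigr do rewrite mulrBr.
  by rewrite sumrB -mulr_suml pi_sum mul1r subrr.
have hv : \sum_t pi t * g t ^+ 2 <= (Hi - Lo) ^+ 2.
  rewrite -[X in _ <= X]mul1r -pi_sum mulr_suml; apply: ler_sum => t _.
  apply: ler_wpM2l => //; rewrite -real_normK ?num_real // -[(Hi - Lo)^+2]real_normK ?num_real //.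
  rewrite ler_sqr ?nnegrE ?normr_ge0 //.
  have := mu_ge; have := mu_le; have := e_lo t; have := e_hi t.
  rewrite /g (ger0_norm HLp) => a b c d.
  by rewrite ler_norml; apply/andP; split; lra.
have hE : E ^+ 2 <= M%:R * (Hi - Lo) ^+ 2.
  have := cs_abs pi_sum X pi_ge0; rewrite -/E => h; apply: le_trans h _.
  rewrite (var_sum M pi_sum gs); apply: ler_wpM2l => //; exact: ler0n.
have hE2 : E <= Num.sqrt M%:R * (Hi - Lo).
  rewrite -(ger0_norm E0) -sqrtr_sqr.
  rewrite -(ger0_norm HLp) -sqrtr_sqr -sqrtrM ?ler0n //.
  exact: ler_wsqrtr.
have mu0 := mu_gt0.
have M0 := M_gt0R.
have : mu * (2^-1 * (E / K + 2 * eps / mu)) = E / (2 * M%:R) + eps.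
  rewrite /K; field; rewrite ?gt_eqF //.
move=> eq1.
apply: le_trans (_ : mu * (2^-1 * (E / K + 2 * eps / mu)) <= _).
  apply: ler_wpM2l; first exact: ltW.
  apply: ler_wpM2l => //; lra.
rewrite eq1 addrC lerD2l.
apply: ler_wpM2r; first by rewrite invr_ge0 mulr_ge0 // ler0n.
by rewrite mulrC.
Qed.

Lemma Qs_ge0 z : 0 <= Qs z.
Proof.
apply: sumr_ge0 => c _; apply: mulr_ge0; first exact: sumA_ge0.
apply: divr_ge0; last exact: ltW (W_gt0 c).
by apply: sumr_ge0 => m _; exact: ltW.
Qed.

Lemma Qs_sum : \sum_z Qs z = 1.
Proof.
rewrite /Qs exchange_big /= -(sumA M pi_sum); apply: eq_bigr => c _.
rewrite -mulr_sumr -mulr_suml part_sum divff ?mulr1 //.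
by rewrite gt_eqF // W_gt0.
Qed.

Lemma Ps_ge0 z : 0 <= Ps z.
Proof.
apply: divr_ge0; last exact: ltW mu_gt0.
by apply: mulr_ge0 => //; apply: le_trans (ltW Lo_gt0) (e_lo z).
Qed.

Lemma Ps_sum : \sum_z Ps z = 1.
Proof. by rewrite /Ps -mulr_suml -/mu divff // gt_eqF // mu_gt0. Qed.

Lemma tv_le1 : 2^-1 * \sum_z `|Qs z - Ps z| <= 1.
Proof.
have : \sum_z `|Qs z - Ps z| <= \sum_z Qs z + \sum_z Ps z.
  rewrite -big_split; apply: ler_sum => z _.
  apply: le_trans (ler_normB _ _) _.
  by rewrite (ger0_norm (Qs_ge0 z)) (ger0_norm (Ps_ge0 z)).
rewrite Qs_sum Ps_sum; lra.
Qed.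
End Step.

Section Chain.
Variables (R : realType) (V : finType) (dx : nat) (Y : Type)
  (K : kernel R V dx Y) (r : Y -> state V dx -> R) (Ehat : Y -> nat -> state V dx -> R)
  (T I M : nat) (lam D eps : R) (y : Y).
Hypothesis K_ge0 : forall t y' x x', (1 <= t <= T)%N -> 0 <= K t y' x x'.
Hypothesis K_sum : forall t y' x, (1 <= t <= T)%N -> \sum_(x' : state V dx) K t y' x x' = 1.

Lemma ptrans_ge0 s n x x' : (s + n <= T)%N -> 0 <= ptrans K y s n x x'.
Proof.
elim: n x x' => [|n IH] x x' hsn /=; first by rewrite ler0n.
apply: sumr_ge0 => z _; apply: mulr_ge0.
  have hk : (1 <= s + n.+1 <= T)%N by rewrite hsn andbT addnS.
  exact: (K_ge0 _ _ _ hk).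
by apply: IH; apply: leq_trans hsn; rewrite leq_add2l.
Qed.

Lemma ptrans_sum s n x : (s + n <= T)%N -> \sum_x' ptrans K y s n x x' = 1.
Proof.
elim: n x => [|n IH] x hsn /=.
  rewrite (bigD1 x) //= eqxx big1 ?addr0 // => z /negbTE.
  by rewrite eq_sym => ->.
have hk : (1 <= s + n.+1 <= T)%N by rewrite hsn andbT addnS.
rewrite exchange_big /= -(K_sum y x hk).
apply: eq_bigr => z _; rewrite -mulr_sumr IH ?mulr1 //.
by apply: leq_trans hsn; rewrite leq_add2l.
Qed.

Lemma ptrans_CK s n m x x'' :
  ptrans K y s (n + m)%N x x'' = \sum_z ptrans K y (s + m)%N n x z * ptrans K y s m z x''.
Proof.
elim: n x => [|n IH] x /=.
  rewrite add0n (bigD1 x) //= eqxx mul1r big1 ?addr0 // => z /negbTE.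
  by rewrite eq_sym => ->; rewrite mul0r.
rewrite ?addSn /=.
have -> : ((s + (n + m).+1)%R = (s + m)%N + n.+1)%R.
  by rewrite /GRing.add /= addnS addnA addnAC addnS.
transitivity (\sum_z K ((s + m)%N + n.+1)%R y x z *
   \sum_w ptrans K y (s + m) n z w * ptrans K y s m w x'').
  by apply: eq_bigr => z _; congr (_ * _); exact: IH.
transitivity (\sum_z \sum_w K ((s + m)%N + n.+1)%R y x z *
   (ptrans K y (s + m) n z w * ptrans K y s m w x'')).
  by apply: eq_bigr => z _; rewrite mulr_sumr.
rewrite exchange_big /=; apply: eq_bigr => w _.
by rewrite mulr_suml; apply: eq_bigr => z _; rewrite mulrA.
Qed.

Hypothesis r_bd : forall y' x0, - D <= r y' x0 <= D.
Hypothesis lam_gt0 : 0 < lam.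

Definition Lo := expR (- (D / lam)).
Definition Hi := expR (D / lam).
Definition ex x0 := expR (r y x0 / lam).

Lemma ex_bounds x0 : Lo <= ex x0 <= Hi.
Proof.
have [h1 h2] := andP (r_bd y x0).
have li : 0 < lam^-1 by rewrite invr_gt0.
rewrite /Lo /Hi /ex !ler_expR; apply/andP; split.
  by rewrite -mulNr ler_pM2r.
by rewrite ler_pM2r.
Qed.

Lemma energy_CK s t x : (s <= t)%N ->
  energy K r lam y t x = \sum_z ptrans K y s (t - s) x z * energy K r lam y s z.
Proof.
move=> hst; rewrite /energy /pref_compl.
transitivity (\sum_x0 (\sum_z ptrans K y s (t - s) x z * ptrans K y 0 s z x0) * ex x0).
  apply: eq_bigr => x0 _; congr (_ * _).
  have := ptrans_CK 0 (t - s) s x x0; rewrite subnK // add0n => ->.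
rewrite /ex; under eq_bigr do rewrite mulr_suml.
rewrite exchange_big /=; apply: eq_bigr => z _; rewrite mulr_sumr.
by apply: eq_bigr => x0 _; rewrite mulrA.
Qed.

Lemma energy_bounds s x : (s <= T)%N ->
  Lo <= energy K r lam y s x <= Hi.
Proof.
move=> hs; have hs' : (0 + s <= T)%N by rewrite add0n.
have hsum := ptrans_sum x hs'.
rewrite /energy /pref_compl; apply/andP; split.
  rewrite -[Lo]mul1r -hsum mulr_suml; apply: ler_sum => x0 _.
  apply: ler_wpM2l; first exact: ptrans_ge0.
  by have /andP[] := ex_bounds x0.
rewrite -[Hi]mul1r -hsum mulr_suml; apply: ler_sum => x0 _.
apply: ler_wpM2l; first exact: ptrans_ge0.
by have /andP[] := ex_bounds x0.
Qed.

Lemma tstep0 : tstep T I 0 = 0%N.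
Proof. by rewrite /tstep mul0n div0n. Qed.
Lemma tstepI : (0 < I)%N -> tstep T I I = T.
Proof. by move=> hI; rewrite /tstep mulKn. Qed.
Lemma tstep_mono k k' : (k <= k')%N -> (tstep T I k <= tstep T I k')%N.
Proof. by move=> h; rewrite /tstep leq_div2r // leq_mul2r h orbT. Qed.
Lemma tstep_le k : (0 < I)%N -> (k <= I)%N -> (tstep T I k <= T)%N.
Proof. by move=> hI hk; rewrite -{2}(tstepI hI) tstep_mono. Qed.

Hypothesis M_gt0 : (0 < M)%N.
Hypothesis I_gt0 : (0 < I)%N.
Hypothesis Ehat_gt0 : forall y' s x, 0 < Ehat y' s x.
Hypothesis ew : forall y' s x, (s <= T)%N -> `|energy K r lam y' s x - Ehat y' s x| <= eps.

Notation S := (state V dx).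
Notation xT := (fully_masked V dx).
Notation tk k := (tstep T I k).
Notation E s x := (energy K r lam y s x).

Lemma Lo_gt0 : 0 < Lo. Proof. exact: expR_gt0. Qed.

Lemma E_gt0 s x : (s <= T)%N -> 0 < E s x.
Proof. move=> hs; have /andP[h _] := energy_bounds x hs; exact: lt_le_trans Lo_gt0 h. Qed.

Definition Cn := E T xT.
Lemma Cn_gt0 : 0 < Cn. Proof. exact: E_gt0. Qed.

Definition pmarg k x := ptrans K y (tk k) (T - tk k) xT x * E (tk k) x / Cn.
Definition Hk k x0 := \sum_x pmarg k x * ets_from K Ehat T I M y k x x0.
Definition Qk k x z := ets_step K Ehat M y (tk k.+1) (tk k) x z.
Definition Pk k x z := pref_trans K y (tk k.+1) (tk k) x z * E (tk k) z / E (tk k.+1) x.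

Section Lev.
Variable k : nat.
Hypothesis hk : (k < I)%N.
Let a := tk k.
Let b := tk k.+1.
Let hab : (a <= b)%N := tstep_mono (leqnSn k).
Let hbT : (b <= T)%N := tstep_le I_gt0 hk.
Let haT : (a <= T)%N := leq_trans hab hbT.

Lemma pi_ge0 x z : 0 <= pref_trans K y b a x z.
Proof. apply: ptrans_ge0; by rewrite subnKC. Qed.
Lemma pi_sum x : \sum_z pref_trans K y b a x z = 1.
Proof. apply: ptrans_sum; by rewrite subnKC. Qed.

Lemma mu_E x : mu (pref_trans K y b a x) (energy K r lam y a) = E b x.
Proof. by rewrite (energy_CK x hab). Qed.

Lemma Qk_Qs x z : Qk k x z = Qs M (pref_trans K y b a x) (Ehat y a) z.
Proof. by []. Qed.

Lemma Pk_Ps x z : Pk k x z = Ps (pref_trans K y b a x) (energy K r lam y a) z.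
Proof. by rewrite /Pk /Ps mu_E. Qed.

Definition TVx x := 2^-1 * \sum_z `|Qk k x z - Pk k x z|.

Lemma TVx_eq x : TVx x = 2^-1 * \sum_z `|Qs M (pref_trans K y b a x) (Ehat y a) z
   - Ps (pref_trans K y b a x) (energy K r lam y a) z|.
Proof. by rewrite /TVx; congr (_ * _); apply: eq_bigr => z _; rewrite Qk_Qs Pk_Ps. Qed.

Lemma e_lo z : Lo <= E a z. Proof. by have /andP[] := energy_bounds z haT. Qed.
Lemma e_hi z : E a z <= Hi. Proof. by have /andP[] := energy_bounds z haT. Qed.

Lemma TVx_le1 x : TVx x <= 1.
Proof.
rewrite TVx_eq; exact: (tv_le1 (pi_ge0 x) (pi_sum x) M_gt0 (fun t => Ehat_gt0 y a t) e_lo Lo_gt0).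
Qed.

Lemma TVx_le x : E b x * TVx x <= eps + (Hi - Lo) * Num.sqrt M%:R / (2 * M%:R).
Proof.
rewrite TVx_eq -mu_E; exact: (step_bound (pi_ge0 x) (pi_sum x) M_gt0
  (fun t => Ehat_gt0 y a t) (fun t => ew y t haT) e_lo e_hi Lo_gt0).
Qed.

Lemma Qk_ge0 x z : 0 <= Qk k x z.
Proof.
rewrite Qk_Qs; exact: (Qs_ge0 (pi_ge0 x) M_gt0 (fun t => Ehat_gt0 y a t)).
Qed.
Lemma Qk_sum x : \sum_z Qk k x z = 1.
Proof.
under eq_bigr do rewrite Qk_Qs.
exact: (Qs_sum (pi_sum x) M_gt0 (fun t => Ehat_gt0 y a t)).
Qed.
End Lev.

Lemma pmarg_ge0 k x : (k <= I)%N -> 0 <= pmarg k x.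
Proof.
move=> hk; have hT := tstep_le I_gt0 hk.
apply: divr_ge0; last exact: ltW Cn_gt0.
apply: mulr_ge0; first by apply: ptrans_ge0; rewrite subnKC.
exact: ltW (E_gt0 _ hT).
Qed.

Lemma pmarg_sum k : (k <= I)%N -> \sum_x pmarg k x = 1.
Proof.
move=> hk; have hT := tstep_le I_gt0 hk.
rewrite /pmarg -mulr_suml -(energy_CK xT hT) divff //.
by rewrite gt_eqF // Cn_gt0.
Qed.

Lemma ets_from_prop k : (k <= I)%N -> forall x,
  (forall x0, 0 <= ets_from K Ehat T I M y k x x0) /\ \sum_x0 ets_from K Ehat T I M y k x x0 = 1.
Proof.
elim: k => [|k IH] hk x /=.
  split; first by move=> x0; rewrite ler0n.
  rewrite (bigD1 x) //= eqxx big1 ?addr0 // => z /negbTE.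
  by rewrite eq_sym => ->.
have hk' : (k <= I)%N by apply: ltnW.
split.
  move=> x0; apply: sumr_ge0 => z _; apply: mulr_ge0.
    exact: (Qk_ge0 hk).
  by have [] := IH hk' z.
rewrite exchange_big /= -(Qk_sum hk x); apply: eq_bigr => z _.
rewrite -mulr_sumr; have [_ ->] := IH hk' z; rewrite mulr1 //.
Qed.

Section Lev2.
Variable k : nat.
Hypothesis hk : (k < I)%N.
Let a := tk k.
Let b := tk k.+1.
Let hab : (a <= b)%N := tstep_mono (leqnSn k).
Let hbT : (b <= T)%N := tstep_le I_gt0 hk.
Let haT : (a <= T)%N := leq_trans hab hbT.

Lemma pmarg_step z : pmarg k z = \sum_x pmarg k.+1 x * Pk k x z.
Proof.
have C0 := Cn_gt0.
transitivity ((\sum_x ptrans K y b (T - b) xT x * pref_trans K y b a x z) * E a z / Cn).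
  rewrite /pmarg; apply: (congr1 (fun u => u * E a z / Cn)).
  have := ptrans_CK a (T - b) (b - a) xT z.
  by rewrite subnKC // addnBA // subnK // => <-.
rewrite !mulr_suml; apply: eq_bigr => x _.
rewrite /pmarg /Pk.
have Eb := E_gt0 x hbT.
by field; rewrite ?gt_eqF.
Qed.

Lemma level : 2^-1 * \sum_x0 `|Hk k.+1 x0 - Hk k x0| <= \sum_x pmarg k.+1 x * TVx k x.
Proof.
pose F z x0 := ets_from K Ehat T I M y k z x0.
pose Dz z := \sum_x pmarg k.+1 x * (Qk k x z - Pk k x z).
have hF := ets_from_prop (ltnW hk).
have eq1 x0 : Hk k.+1 x0 - Hk k x0 = \sum_z Dz z * F z x0.
  rewrite /Hk /=.
  transitivity (\sum_z (\sum_x pmarg k.+1 x * Qk k x z) * F z x0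
               - \sum_z (\sum_x pmarg k.+1 x * Pk k x z) * F z x0).
    congr (_ - _).
      under eq_bigr do rewrite mulr_sumr.
      rewrite exchange_big /=; apply: eq_bigr => z _.
      by rewrite mulr_suml; apply: eq_bigr => x _; rewrite mulrA.
    by apply: eq_bigr => z _; rewrite pmarg_step.
  rewrite -sumrB; apply: eq_bigr => z _.
  by rewrite -mulrBl /Dz -sumrB; congr (_ * _); apply: eq_bigr => x _; rewrite mulrBr.
have h1 : \sum_x0 `|Hk k.+1 x0 - Hk k x0| <= \sum_z `|Dz z|.
  apply: (@le_trans _ _ (\sum_x0 \sum_z `|Dz z| * F z x0)).
    apply: ler_sum => x0 _; rewrite eq1; apply: le_trans (ler_norm_sum _ _ _) _.
    apply: ler_sum => z _; rewrite normrM (ger0_norm (proj1 (hF z) x0)) //.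
  rewrite exchange_big /=; apply: ler_sum => z _.
  by rewrite -mulr_sumr (proj2 (hF z)) mulr1.
have h2 : \sum_z `|Dz z| <= \sum_x pmarg k.+1 x * \sum_z `|Qk k x z - Pk k x z|.
  apply: (@le_trans _ _ (\sum_z \sum_x pmarg k.+1 x * `|Qk k x z - Pk k x z|)).
    apply: ler_sum => z _; apply: le_trans (ler_norm_sum _ _ _) _.
    apply: ler_sum => x _; rewrite normrM ger0_norm //; exact: pmarg_ge0.
  rewrite exchange_big /=; apply: ler_sum => x _; by rewrite mulr_sumr.
have h3 := le_trans h1 h2.
rewrite /TVx; under [X in _ <= X]eq_bigr do rewrite mulrCA.
rewrite -mulr_sumr; apply: ler_wpM2l => //; lra.
Qed.
End Lev2.


Definition Bnd := eps + (Hi - Lo) * Num.sqrt M%:R / (2 * M%:R).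

Lemma level_le1 k : (k < I)%N -> \sum_x pmarg k.+1 x * TVx k x <= 1.
Proof.
move=> hk; rewrite -(pmarg_sum hk); apply: ler_sum => x _.
rewrite -[X in _ <= X]mulr1; apply: ler_wpM2l; first exact: pmarg_ge0.
exact: TVx_le1.
Qed.

Lemma level_leB k : (k < I)%N -> \sum_x pmarg k.+1 x * TVx k x <= Bnd / Cn.
Proof.
move=> hk; have hbT := tstep_le I_gt0 hk.
have hs : (tk k.+1 + (T - tk k.+1) <= T)%N by rewrite subnKC.
have C0 := Cn_gt0.
rewrite -[Bnd / Cn]mul1r -(ptrans_sum xT hs) !mulr_suml; apply: ler_sum => x _.
have -> : pmarg k.+1 x * TVx k x =
   ptrans K y (tk k.+1) (T - tk k.+1) xT x * ((E (tk k.+1) x * TVx k x) / Cn).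
  by rewrite /pmarg; field; rewrite gt_eqF.
apply: ler_wpM2l; first exact: ptrans_ge0.
apply: ler_wpM2r; first by rewrite invr_ge0 ltW.
exact: TVx_le.
Qed.

Lemma telescope (F : nat -> S -> R) n :
  2^-1 * \sum_x `|F n x - F 0%N x| <= \sum_(k < n) 2^-1 * \sum_x `|F k.+1 x - F k x|.
Proof.
elim: n => [|n IH]; first by rewrite big_ord0; under eq_bigr do rewrite subrr normr0; rewrite big1 ?mulr0.
rewrite big_ord_recr /=.
have h : 2^-1 * \sum_x `|F n.+1 x - F 0%N x| <=
   2^-1 * \sum_x `|F n x - F 0%N x| + 2^-1 * \sum_x `|F n.+1 x - F n x|.
  rewrite -mulrDr -big_split /=; apply: ler_wpM2l; first by rewrite invr_ge0.
  apply: ler_sum => x _.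
  rewrite addrC; have -> : F n.+1 x - F 0%N x = (F n.+1 x - F n x) + (F n x - F 0%N x) by ring.
  exact: ler_normD.
apply: le_trans h _; by rewrite lerD2r.
Qed.

Lemma HkI x0 : Hk I x0 = ets_law K Ehat T I M y x0.
Proof.
rewrite /Hk /pmarg tstepI // subnn /= (bigD1 xT) //= eqxx mul1r big1 ?addr0.
  by rewrite divff ?mul1r // gt_eqF // Cn_gt0.
by move=> x /negbTE; rewrite eq_sym => ->; rewrite !mul0r.
Qed.

Lemma Hk0 x0 : Hk 0 x0 = target K r lam T y x0.
Proof.
rewrite /Hk /= (bigD1 x0) //= eqxx mulr1 big1 ?addr0; last first.
  by move=> x /negbTE ->; rewrite mulr0.
rewrite /pmarg tstep0 subn0 /target /pref0 /pref_compl /normC /Cn.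
congr (_ * _ / _).
rewrite /energy /pref_compl /= (bigD1 x0) //= eqxx mul1r big1 ?addr0 // => z /negbTE.
by rewrite eq_sym => ->; rewrite mul0r.
Qed.

End Chain.

Lemma ln2_ge (R : realType) (eps : R) : 0 < eps -> eps < 1 -> 1 / 2 <= ln (2 / eps).
Proof.
move=> e0 e1.
have h1 : expR (1 / 2) <= 2 :> R.
  have := expRxMexpNx_1 (1 / 2 : R); have := expR_ge1Dx (- (1 / 2) : R).
  have := expR_ge0 (1 / 2 : R); nra.
have h2 : 2 <= 2 / eps :> R.
  by rewrite ler_pdivlMr //; lra.
rewrite -[X in X <= _](expRK (1 / 2 : R)) ler_ln ?posrE ?expR_gt0 ?divr_gt0 //.
  exact: le_trans h1 h2.
Qed.

Lemma sqrt_aux (R : realType) (m : nat) (L : R) : (0 < m)%N -> 1 / 2 <= L ->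
  Num.sqrt m%:R / m%:R <= Num.sqrt (2 / m%:R * L).
Proof.
move=> hm hL; have M0 : 0 < m%:R :> R by rewrite ltr0n.
have hL0 : 0 <= 2 / m%:R * L by apply: mulr_ge0; [apply: divr_ge0; [lra|exact: ltW]|lra].
rewrite -ler_sqr ?nnegrE ?sqrtr_ge0 //; last by apply: divr_ge0; [exact: sqrtr_ge0|exact: ltW].
rewrite expr_div_n sqr_sqrtr ?ler0n // sqr_sqrtr //.
have -> : m%:R / m%:R ^+ 2 = 1 / m%:R :> R by field; rewrite gt_eqF.
have -> : 2 / m%:R * L = 1 / m%:R + (2 * L - 1) / m%:R :> R by field; rewrite gt_eqF.
have : 0 <= (2 * L - 1) / m%:R :> R by apply: divr_ge0; [lra|exact: ltW].
lra.
Qed.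

Theorem proposition3 (R : realType) (V : finType) (dx : nat) (Y : Type)
  (K : kernel R V dx Y) (r : Y -> state V dx -> R) (Ehat : Y -> nat -> state V dx -> R)
  (T I M : nat) (lam D eps : R) (y : Y) :
  (* reference model: for 1 <= t <= T, K t y' x is a probability distribution on states *)
  (forall t y' x x', (1 <= t <= T)%N -> 0 <= K t y' x x') ->
  (forall t y' x, (1 <= t <= T)%N -> \sum_(x' : state V dx) K t y' x x' = 1) ->
  (* nested mask sets: a backward step never changes an already unmasked position *)
  (forall t y' x x' (i : 'I_dx), (1 <= t <= T)%N -> K t y' x x' != 0 ->
     x i != None -> x' i = x i) ->
  (* bounded reward *)
  (forall y' x0, - D <= r y' x0 <= D) ->
  0 < lam -> (1 <= M)%N -> (1 <= I <= T)%N -> 0 < eps ->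
  (* energy estimates are positive (so the selection weights are probabilities) *)
  (forall y' s x, 0 < Ehat y' s x) ->
  (* eps-accurate energy estimates, for every query and every intermediate state *)
  (forall y' s x, (s <= T)%N -> `|energy K r lam y' s x - Ehat y' s x| <= eps) ->
  normC K r lam T y - eps - hfun eps M lam D > 0 ->
  TV (ets_law K Ehat T I M y) (target K r lam T y)
    <= I%:R * ((2 * eps + hfun eps M lam D) / (normC K r lam T y - eps - hfun eps M lam D))
       + I%:R * eps.
Proof.
move=> K0 Ks _ rb lam0 M1 /andP[I1 IT] e0 Eh ew hC.
set h := hfun eps M lam D.
set C := normC K r lam T y.
move: hC; rewrite -/h -/C => hC.
have CnC : Cn K r T lam y = C by [].
have D0 : 0 <= D by have /andP[a b] := rb y (fully_masked V dx); lra.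
have HL : 0 <= Hi lam D - Lo lam D.
  by rewrite subr_ge0 /Hi /Lo ler_expR; apply: (@le_trans _ _ 0);
    [rewrite oppr_le0|]; apply: divr_ge0 => //; exact: ltW.
have h0 : 0 <= h.
  rewrite /h /hfun; apply: mulr_ge0; last exact: sqrtr_ge0.
  apply: divr_ge0 => //; exact: HL.
have -> : TV (ets_law K Ehat T I M y) (target K r lam T y) =
   2^-1 * \sum_x `|Hk K r Ehat T I M lam y I x - Hk K r Ehat T I M lam y 0%N x|.
  rewrite /TV; congr (_ * _); apply: eq_bigr => x _.
  by rewrite (HkI Ehat M y K0 Ks rb lam0 I1) (Hk0 K r Ehat T I M lam y).
apply: le_trans (telescope _ I) _.
rewrite -mulrDr.
set A := (2 * eps + h) / (C - eps - h) + eps.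
have -> : I%:R * A = \sum_(k < I) A by rewrite sumr_const card_ord mulr_natl.
apply: ler_sum => k _.
have hk := ltn_ord k.
apply: le_trans (level y K0 Ks rb lam0 M1 I1 Eh hk) _.
set x := \sum_x _.
have x1 : x <= 1 := level_le1 y K0 Ks rb lam0 M1 I1 Eh hk.
have xB : x <= Bnd M lam D eps / C := level_leB y K0 Ks rb lam0 M1 I1 Eh ew hk.
have C0 : 0 < C by move: hC; rewrite -/h -/C => hC'; lra.
have A1 : 0 <= (2 * eps + h) / (C - eps - h) by apply: divr_ge0; lra.
case: (leP 1 eps) => he.
  rewrite /A; lra.
have hB : Bnd M lam D eps <= eps + h.
  rewrite /Bnd lerD2l /h /hfun.
  have -> : (Hi lam D - Lo lam D) * Num.sqrt M%:R / (2 * M%:R) =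
     (Hi lam D - Lo lam D) / 2 * (Num.sqrt M%:R / M%:R).
    have hM : 0 < M%:R :> R by rewrite ltr0n.
    by field; rewrite gt_eqF.
  apply: ler_wpM2l; first by apply: divr_ge0 => //; lra.
  exact: sqrt_aux (ln2_ge e0 he).
have h2 : Bnd M lam D eps / C <= (eps + h) / C by apply: ler_wpM2r => //; rewrite invr_ge0 ltW.
have h3 : (eps + h) / C <= (2 * eps + h) / (C - eps - h).
  apply: (@le_trans _ _ ((eps + h) / (C - eps - h))).
    apply: ler_wpM2l; first lra.
    rewrite lef_pV2 ?posrE //; lra.
  apply: ler_wpM2r; last lra.
  by rewrite invr_ge0; lra.
rewrite /A; lra.
Qed.
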